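(* Assume Gompertzian growth, $\phi(x)=b\ln(X_\infty/x)$ with $b>0$ and $X_\infty>0$, and let $x(t)=X_0^{e^{-bt}}X_\infty^{1-e^{-bt}}$ be the untreated tumor trajectory starting from $x(0)=X_0>0$. Then for any doses $d_0,\dots,d_{N-1}\ge0$ and every $i=0,1,\dots,N-1$, $$Y_i^+=\frac{1}{\alpha_T}\ln\big(x(i)\big)-\sum_{k=0}^{i}e^{-b(i-k)}\,\mathrm{BED}_T(d_k).$$ Consequently, minimizing $Y_{N-1}^+$ subject to $\sum_{k=0}^{N-1}\mathrm{BED}_O(d_k)\le c$ is equivalent to maximizing $\sum_{k=0}^{N-1}e^{-b(N-1-k)}\mathrm{BED}_T(d_k)$ subject to the same constraint.
   Context: Tumor parameters $\alpha_T>0$, $\beta_T>0$, $[\alpha/\beta]_T=\alpha_T/\beta_T$; $\mathrm{BED}_T(d)=d\left(1+\frac{d}{[\alpha/\beta]_T}\right)$; OAR parameters $[\alpha/\beta]_O>0$, $0<\gamma<1$, $c>0$, and $\mathrm{BED}_O(d)=\gamma d\left(1+\frac{\gamma d}{[\alpha/\beta]_O}\right)$. Tumor growth between doses follows $\frac{1}{x}\frac{dx}{dt}=\phi(x)$. Doses are delivered at integer times $0,\dots,N-1$. With $Y=\ln(\text{number of tumor cells})/\alpha_T$, let $F$ be the one-day growth map for $Y$ under the ODE; $Y_0^-=\ln(X_0)/\alpha_T$, $Y_0^+=Y_0^--\mathrm{BED}_T(d_0)$, and $Y_{i+1}^+=F(Y_i^+)-\mathrm{BED}_T(d_{i+1})$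 for $i=0,\dots,N-2$. *)

(* Defs.v *)
From Stdlib Require Import Reals Lra Lia.
From Coquelicot Require Import Coquelicot.
Open Scope R_scope.

Definition BED_T (alphaT betaT d : R) : R := d * (1 + d / (alphaT / betaT)).
Definition BED_O (abO gamma d : R) : R :=
  gamma * d * (1 + gamma * d / abO).

Definition gompertz_phi (b Xinf x : R) : R := b * ln (Xinf / x).

Definition is_one_day_flow (phi : R -> R) (flow : R -> R -> R) : Prop :=
  forall x0, 0 < x0 ->
    flow x0 0 = x0 /\
    forall t, 0 <= t <= 1 ->
      0 < flow x0 t /\ is_derive (flow x0) t (flow x0 t * phi (flow x0 t)).

(* One-day growth map for Y = ln(number of cells)/alphaT *)
Definition growth_map (alphaT : R) (flow : R -> R -> R) (y : R) : R :=
  ln (flow (exp (alphaT * y)) 1) / alphaT.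

Fixpoint Yplus (alphaT betaT X0 : R) (F : R -> R) (d : nat -> R) (i : nat)
  : R :=
  match i with
  | O => ln X0 / alphaT - BED_T alphaT betaT (d O)
  | S j => F (Yplus alphaT betaT X0 F d j) - BED_T alphaT betaT (d (S j))
  end.

Definition gompertz_traj (b X0 Xinf t : R) : R :=
  Rpower X0 (exp (- b * t)) * Rpower Xinf (1 - exp (- b * t)).

Definition feasible (N : nat) (abO gamma c : R) (d : nat -> R) : Prop :=
  (forall k, (k < N)%nat -> 0 <= d k) /\
  sum_f_R0 (fun k => BED_O abO gamma (d k)) (N - 1) <= c.

Definition disc_BED (b alphaT betaT : R) (N : nat) (d : nat -> R) : R :=
  sum_f_R0 (fun k => exp (- b * (INR (N - 1) - INR k)) * BED_T alphaT betaT (d k))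
    (N - 1).

(* Main.v *)
Require Import Defs.
From Stdlib Require Import Reals.
From Coquelicot Require Import Coquelicot.
From Stdlib Require Import Lra.
Open Scope R_scope.

Lemma flow1 b Xinf flow (HXinf : 0 < Xinf)
  (Hflow : is_one_day_flow (gompertz_phi b Xinf) flow) x0 (Hx0 : 0 < x0) :
  ln (flow x0 1) = exp (-b) * ln x0 + (1 - exp (-b)) * ln Xinf.
Proof.
  destruct (Hflow x0 Hx0) as [H0 Hd].
  pose (g :=  fun t => (ln (flow x0 t) - ln Xinf) * exp (b * t)).
  assert (Dg : forall t, 0 <= t <= 1 -> is_derive g t 0).
  { intros t Ht. destruct (Hd t Ht) as [Hp Hder].
    assert (H1 : is_derive (fun t => ln (flow x0 t) - ln Xinf) t
               (flow x0 t * gompertz_phi b Xinf (flow x0 t) * / flow x0 t - 0)).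
    { pose proof (is_derive_comp ln (flow x0) t _ _ (is_derive_ln _ Hp) Hder) as K1.
      pose proof (is_derive_minus _ _ t _ _ K1 (is_derive_const (ln Xinf) t)) as K2.
      exact K2. }
    assert (H2 : is_derive (fun t => exp (b * t)) t (b * 1 * exp (b*t))).
    { pose proof (is_derive_scal (fun t => t) t b 1 (is_derive_id t)) as K1.
      pose proof (is_derive_comp exp (fun t => b * t) t _ _ (is_derive_exp (b*t)) K1) as K2.
      exact K2. }
    pose proof (is_derive_mult _ _ t _ _ H1 H2 (fun a b => Rmult_comm a b)) as H3.
    unfold g. 
    replace 0 with ((flow x0 t * gompertz_phi b Xinf (flow x0 t) * / flow x0 t - 0) *
      exp (b * t) + (ln (flow x0 t) - ln Xinf) * (b * 1 * exp (b * t))).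
    exact H3.
    unfold gompertz_phi. rewrite ln_div; auto. field. lra. }
  destruct (MVT_gen g 0 1 (fun _ => 0)) as [c [_ Hc]].
  - intros x Hx. apply Dg. rewrite Rmin_left in Hx by lra. rewrite Rmax_right in Hx by lra. lra.
  - intros x Hx. rewrite Rmin_left in Hx by lra. rewrite Rmax_right in Hx by lra.
    apply derivable_continuous_pt. exists 0. apply is_derive_Reals. apply Dg. lra.
  - unfold g in Hc. rewrite H0, Rmult_0_r, exp_0, Rmult_1_r in Hc.
    assert (E : ln (flow x0 1) - ln Xinf = exp (-b) * (ln x0 - ln Xinf)).
    { replace (-b) with (- (b*1)) by ring. rewrite exp_Ropp.
      assert (exp (b*1) > 0) by apply exp_pos.
      rewrite Rmult_1_r in *. apply (Rmult_eq_reg_r (exp b)); [|lra]. rewrite (Rmult_comm (/ exp b)), Rmult_assoc, Rinv_l, Rmult_1_r by lra. lra. }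
    lra.
Qed.

Lemma ln_traj b X0 Xinf t (HX0 : 0 < X0) (HXinf : 0 < Xinf) :
  ln (gompertz_traj b X0 Xinf t) = exp (-b*t) * ln X0 + (1 - exp (-b*t)) * ln Xinf.
Proof.
  unfold gompertz_traj, Rpower. rewrite ln_mult by apply exp_pos.
  rewrite !ln_exp. ring.
Qed.

Lemma Yplus_formula alphaT betaT b Xinf X0 flow (HalphaT : 0 < alphaT)
  (HXinf : 0 < Xinf) (HX0 : 0 < X0)
  (Hflow : is_one_day_flow (gompertz_phi b Xinf) flow) d i :
  Yplus alphaT betaT X0 (growth_map alphaT flow) d i =
       ln (gompertz_traj b X0 Xinf (INR i)) / alphaT
       - sum_f_R0 (fun k => exp (- b * (INR i - INR k)) * BED_T alphaT betaT (d k)) i.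
Proof.
  induction i as [|j IH].
  - simpl. rewrite ln_traj by auto. rewrite Rminus_0_r, Rmult_0_r, exp_0. field. lra.
  - simpl Yplus. rewrite IH. unfold growth_map.
    rewrite (flow1 b Xinf flow HXinf Hflow) by apply exp_pos.
    rewrite ln_exp, tech5.
    rewrite !ln_traj by auto.
    assert (Hs : sum_f_R0 (fun k => exp (- b * (INR (S j) - INR k)) * BED_T alphaT betaT (d k)) j
      = exp (-b) * sum_f_R0 (fun k => exp (- b * (INR j - INR k)) * BED_T alphaT betaT (d k)) j).
    { rewrite scal_sum. apply sum_eq. intros k _. rewrite S_INR.
      replace (- b * (INR j + 1 - INR k)) with (- b * (INR j - INR k) + -b) by ring.
      rewrite exp_plus. ring. }
    rewrite Hs.
    replace (- b * INR (S j)) with (- b * INR j + - b) by (rewrite S_INR; ring).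
    rewrite exp_plus.
    replace (- b * (INR (S j) - INR (S j))) with 0 by ring.
    rewrite exp_0. field. lra.
Qed.

Theorem mainTheorem6
  (alphaT betaT abO gamma c b Xinf X0 : R) (N : nat) (flow : R -> R -> R)
  (HalphaT : 0 < alphaT) (HbetaT : 0 < betaT) (HabO : 0 < abO)
  (Hgamma : 0 < gamma < 1) (Hc : 0 < c)
  (Hb : 0 < b) (HXinf : 0 < Xinf) (HX0 : 0 < X0) (HN : (1 <= N)%nat)
  (Hflow : is_one_day_flow (gompertz_phi b Xinf) flow) :
  (forall d : nat -> R, (forall k, (k < N)%nat -> 0 <= d k) ->
     forall i, (i < N)%nat ->
       Yplus alphaT betaT X0 (growth_map alphaT flow) d i =
       ln (gompertz_traj b X0 Xinf (INR i)) / alphaT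
       - sum_f_R0 (fun k => exp (- b * (INR i - INR k)) * BED_T alphaT betaT (d k)) i)
  /\
  (forall dstar : nat -> R, feasible N abO gamma c dstar ->
     ((forall d, feasible N abO gamma c d ->
         Yplus alphaT betaT X0 (growth_map alphaT flow) dstar (N - 1)
         <= Yplus alphaT betaT X0 (growth_map alphaT flow) d (N - 1))
      <->
      (forall d, feasible N abO gamma c d ->
         disc_BED b alphaT betaT N d <= disc_BED b alphaT betaT N dstar))).
Proof.
  split.
  - intros d _ i _. apply Yplus_formula; auto.
  - intros dstar _.
    assert (E : forall d, Yplus alphaT betaT X0 (growth_map alphaT flow) d (N - 1) =
      ln (gompertz_traj b X0 Xinf (INR (N-1))) / alphaT - disc_BED b alphaT betaT N d).
    { intros d. rewrite (Yplus_formula alphaT betaT b Xinf X0 flow); auto. }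
    split; intros H d Hd; specialize (H d Hd); rewrite !E in *; lra.
Qed.
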